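(* Let $g:\mathbb N\to\mathbb N$ be a nondecreasing function with $g(i)\ge i$ for all $i\in\mathbb N$, let $n\ge1$, and let $A=\{a_1^{g(1)},a_2^{g(2)},\ldots,a_n^{g(n)}\}$. For $j\ge1$ put $g^{-1}(j)=\min\{i: g(i)\ge j\}$. Then for every integer $m$ with $1\le m\le n$, $$|C_m(A)|=\sum_{\substack{\lambda_1+2\lambda_2+\cdots+m\lambda_m=m\\ \lambda_i\in\mathbb Z_{\ge0}}}\ \prod_{j=1}^m\binom{n-g^{-1}(j)-\sum_{i=j+1}^m\lambda_i+1}{\lambda_j},$$ the sum running over all non-negative integer solutions of $\lambda_1+2\lambda_2+\cdots+m\lambda_m=m$.
   Context: A multiset $A=\{a_1^{k_1},\ldots,a_n^{k_n}\}$ consists of distinct elements $a_1,\ldots,a_n$ with positive integer multiplicities $k_1,\ldots,k_n$. A submultiset of $A$ is a multiset $\{a_1^{r_1},\ldots,a_n^{r_n}\}$ with integers $0\le r_i\le k_i$, of cardinality $r_1+\cdots+r_n$. $C_m(A)$ denotes the set of all submultisets of $A$ of cardinality $m$. *)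

(* Defs.v *)
From mathcomp Require Import all_boot.
Set Implicit Arguments. Unset Strict Implicit. Unset Printing Implicit Defensive.

(* A multiset {a_1^{k_1},...,a_n^{k_n}} is represented by its multiplicity
   function k : 'I_n -> nat (element a_{i+1} <-> ordinal i).  Since every r_i <= \sum r = m, the
   multiplicities of such submultisets lie in 'I_m.+1 (no loss of generality). *)
Definition Cm (n : nat) (k : 'I_n -> nat) (m : nat) : {set {ffun 'I_n -> 'I_m.+1}} :=
  [set r : {ffun 'I_n -> 'I_m.+1} | [forall i, r i <= k i] && (\sum_(i < n) r i == m)].

(* g^{-1}(j) = min { i >= 1 : g i >= j }.  Whenever g j >= j (which holds under the
   hypotheses of the theorem) this minimum lies in [1, j], and this definition
   returns exactly it: the first i in 1,2,...,j with j <= g i. *)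
Definition ginv (g : nat -> nat) (j : nat) : nat :=
  (find (fun i => j <= g i) (iota 1 j)).+1.

(* Main.v *)
Require Import Defs.
From mathcomp Require Import all_boot.
From mathcomp Require Import zify.
Set Implicit Arguments. Unset Strict Implicit. Unset Printing Implicit Defensive.

Lemma ptw m x : x < m.+1 -> x = \sum_(j < m) j.+1 * (x == j.+1).
Proof.
case: x => [_|x hx]; first by rewrite big1 // => j _; rewrite muln0.
have hx2 : x < m by [].
rewrite (bigD1 (Ordinal hx2)) //= eqxx muln1 big1 ?addn0 // => j hj.
rewrite eqSS; suff -> : (x == j) = false by rewrite muln0.
apply/negbTE; move: hj; apply: contra => /eqP e; apply/eqP; exact: val_inj.
Qed.

Lemma sumfib n m (r : {ffun 'I_n -> 'I_m.+1}) :
  \sum_(i < n) r i = \sum_(j < m) j.+1 * #|[set p | r p == j.+1 :> nat]|.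
Proof.
rewrite (eq_bigr (fun i => \sum_(j < m) j.+1 * (r i == j.+1 :> nat))); last first.
  by move=> i _; apply: ptw.
rewrite exchange_big; apply: eq_bigr => j _; rewrite -big_distrr /=; congr (_ * _).
rewrite -sum1_card [RHS]big_mkcond /=; apply: eq_bigr => i _; rewrite inE.
by case: (_ == _).
Qed.

Lemma le_sum_one m (F : 'I_m -> nat) j : F j <= \sum_(i < m) F i.
Proof. by rewrite (bigD1 j) //= leq_addr. Qed.

Lemma card_ge n a : a <= n -> #|[set p : 'I_n | a <= p]| = n - a.
Proof.
move=> han; rewrite -sum1_card big_mkcond /=.
rewrite (eq_bigr (fun p : 'I_n => (a <= p) : nat)); last first.
  by move=> p _; rewrite inE; case: (a <= p).
rewrite -(big_mkord xpredT (fun p => (a <= p) : nat)) (big_cat_nat (leq0n a) han) /=.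
rewrite big_nat_cond big1 ?add0n; last first.
  by move=> i /andP [/andP [_ hi] _]; rewrite leqNgt hi.
rewrite big_nat_cond (eq_bigr (fun _ => 1)) -?big_nat_cond ?sum_nat_const_nat ?muln1 //.
by move=> i /andP [/andP [hi _] _]; rewrite hi.
Qed.

Lemma ginvP (g : nat -> nat) (g_mono : forall i j, i <= j -> g i <= g j)
  (g_ge : forall i, i <= g i) j :
  (1 <= ginv g j.+1 <= j.+1) /\ forall i, (j.+1 <= g i.+1) = (ginv g j.+1 <= i.+1).
Proof.
rewrite /ginv.
set P := (fun i => j.+1 <= g i).
have hs : has P (iota 1 j.+1).
  by apply/hasP; exists j.+1; [rewrite mem_iota; lia | apply: g_ge].
have hf := hs; rewrite has_find size_iota in hf.
have hn := nth_find 0 hs; rewrite nth_iota // add1n in hn.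
split; first by rewrite /= hf.
move=> i; apply/idP/idP => hi.
  rewrite ltnS leqNgt; apply/negP => hlt.
  have := before_find 0 hlt; rewrite nth_iota ?add1n.
    by rewrite /P hi.
  by apply: ltn_trans hlt hf.
by apply: leq_trans hn (g_mono _ _ hi).
Qed.

Definition SS (T : finType) (m k : nat) (A : nat -> {set T}) (lam : nat -> nat)
  (D : {set T}) : {set {ffun T -> 'I_m.+1}} :=
  [set f : {ffun T -> 'I_m.+1} |
    [forall p, (0 < f p) ==> [&& p \in D, f p <= k & p \in A (f p).-1]]
    && [forall v : 'I_k, #|[set p | f p == v.+1 :> nat]| == lam v]].

Lemma nestA (T : finType) (A : nat -> {set T}) (hA : forall j, A j.+1 \subset A j) :
  forall j k, j <= k -> A k \subset A j.
Proof.
move=> j k; elim: k => [|k IH]; first by rewrite leqn0 => /eqP ->.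
rewrite leq_eqVlt => /orP [/eqP -> // | ]; rewrite ltnS => /IH.
by apply: subset_trans.
Qed.

Lemma core (T : finType) (m : nat) (A : nat -> {set T}) (lam : nat -> nat)
  (hA : forall j, A j.+1 \subset A j) :
  forall k, k <= m -> forall D : {set T}, #|SS m k A lam D| =
  \prod_(j < k) 'C(#|A j :&: D| - \sum_(i < k | j < i) lam i, lam j).
Proof.
elim=> [|k IH] hk D.
  rewrite big_ord0.
  have -> : SS m 0 A lam D = [set [ffun => ord0]].
    apply/setP => f; rewrite !inE; apply/andP/eqP.
      case=> /forallP H _; apply/ffunP => p; rewrite ffunE.
      apply: val_inj => /=; move: (H p); case: (f p) => [[|x] hx] //=.
      by rewrite andbC.
    move=> ->; split; first by apply/forallP => p; rewrite ffunE.
    by apply/forallP => -[].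
  by rewrite cards1.
have hkm : k < m.+1 by apply: leq_trans hk _.
set q : 'I_m.+1 := inord k.+1.
have hq : q = k.+1 :> nat by rewrite /q inordK.
pose phi (B : {set T}) (f : {ffun T -> 'I_m.+1}) :=
  [ffun p => if p \in B then q else f p].
pose P (B : {set T}) := (B \subset A k :&: D) && (#|B| == lam k).
rewrite -sum1_card (partition_big (fun f : {ffun T -> 'I_m.+1} => [set p | f p == k.+1 :> nat]) P).
  transitivity (\sum_(B | P B) \prod_(j < k)
      'C(#|A j :&: D| - (\sum_(i < k | j < i) lam i + lam k), lam j)).
    apply: eq_bigr => B /andP [hB /eqP hBc].
    have E : \sum_(f in SS m k.+1 A lam D | [set p | f p == k.+1 :> nat] == B) 1
       = #|phi B @: SS m k A lam (D :\: B)|.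
      rewrite -sum1_card; apply: eq_bigl => f.
      have gz : forall g p, g \in SS m k A lam (D :\: B) -> p \in B -> g p = 0 :> nat.
        move=> g p; rewrite inE => /andP [/forallP H _] hp.
        move: (H p); case: (g p) => [[|x] hx] //=.
        by rewrite !inE hp.
      have gle : forall g p, g \in SS m k A lam (D :\: B) -> g p <= k.
        move=> g p; rewrite inE => /andP [/forallP H _].
        move: (H p); case: (g p) => [[|x] hx] //=.
        by case/and3P.
      apply/andP/imsetP.
        case=> hf /eqP hB'.
        have hpB : forall p, p \in B -> f p = k.+1 :> nat.
          by move=> p; rewrite -hB' inE => /eqP.
        move: (hf); rewrite inE => /andP [/forallP H1 /forallP H2].
        exists [ffun p => if p \in B then ord0 else f p].
          rewrite inE; apply/andP; split.
            apply/forallP => p; rewrite ffunE; case: ifP => hp //=.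
            apply/implyP => hfp.
            move: (H1 p) => /implyP /(_ hfp) /and3P [hD hle hAp].
            have hne : (f p == k.+1 :> nat) = false by rewrite -hB' inE in hp.
            rewrite !inE hp hD hAp /= andbT.
            by rewrite -ltnS ltn_neqAle hne hle.
          apply/forallP => v; apply/eqP.
          rewrite -(eqP (H2 (widen_ord (leqnSn k) v))); apply: eq_card => p.
          rewrite !inE ffunE /=; case: ifP => hp //.
          rewrite (hpB p hp) eqSS; symmetry; apply/negbTE; by rewrite neq_ltn (ltn_ord v) orbT.
        apply/ffunP => p; rewrite !ffunE; case: ifP => hp; last by rewrite hp.
        by apply: val_inj => /=; rewrite hq; apply: hpB.
      case=> g hg ->.
      split.
        rewrite inE; apply/andP; split.
          apply/forallP => p; rewrite ffunE; case: ifP => hp.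
            rewrite hq /= leqnn.
            by move/subsetP: hB => /(_ p hp); rewrite inE => /andP [-> ->].
          move: (hg); rewrite inE => /andP [/forallP H1 _].
          apply/implyP => h; move/implyP: (H1 p) => /(_ h) /and3P [].
          by rewrite inE => /andP [_ ->] hle ->; rewrite leqW.
        apply/forallP => v.
        case: (ltnP v k) => hv.
          move: (hg); rewrite inE => /andP [_ /forallP H2].
          rewrite -(eqP (H2 (Ordinal hv))); apply/eqP; apply: eq_card => p.
          rewrite !inE ffunE /=; case: ifP => hp.
            by rewrite (gz _ _ hg hp) hq eqSS (gtn_eqF hv).
          by [].
        have vk : nat_of_ord v = k by apply/eqP; rewrite eqn_leq hv -ltnS ltn_ord andbT.
        rewrite vk -hBc; apply/eqP; apply: eq_card => p.
        rewrite !inE ffunE; case: ifP => hp; first by rewrite hq eqxx.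
        by apply/negbTE; rewrite neq_ltn ltnS gle.
      apply/eqP/setP => p; rewrite !inE ffunE; case: ifP => hp; first by rewrite hq eqxx.
      by apply/negbTE; rewrite neq_ltn ltnS gle.
    rewrite E card_in_imset; last first.
      have z : forall f p, f \in SS m k A lam (D :\: B) -> p \in B -> f p = ord0.
        move=> f p; rewrite inE => /andP [/forallP H _] hp.
        apply: val_inj => /=; move: (H p); case: (f p) => [[|x] hx] //=.
        by rewrite !inE hp.
      move=> f1 f2 h1 h2 E12; apply/ffunP => p.
      have := congr1 (fun h : {ffun T -> 'I_m.+1} => h p) E12; rewrite /phi !ffunE.
      case: (boolP (p \in B)) => hp //.
      by rewrite (z _ _ h1 hp) (z _ _ h2 hp).
    rewrite IH; last by apply: ltnW.
    apply: eq_bigr => j _; congr 'C(_, _).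
    rewrite setIDA cardsD.
    have hBj : B \subset A j :&: D.
      apply: subset_trans hB _; apply: setSI; apply: nestA => //.
      by apply: ltnW.
    by rewrite (setIidPr hBj) hBc addnC subnDA.
  rewrite sum_nat_const.
  have -> : #|[pred B | P B]| = 'C(#|A k :&: D|, lam k).
    by rewrite -cards_draws; apply: eq_card => B; rewrite inE.
  rewrite big_ord_recr /= mulnC; congr (_ * _).
    apply: eq_bigr => j _.
    rewrite (big_mkcond (fun i : 'I_k.+1 => widen_ord (leqnSn k) j < i)) big_ord_recr /=.
    by rewrite -big_mkcond /= ltn_ord.
  by rewrite big_pred0 ?subn0 // => i; rewrite ltnNge -ltnS ltn_ord.
move=> f; rewrite inE => /andP [/forallP H1 /forallP H2].
rewrite /P; apply/andP; split.
  apply/subsetP => p; rewrite !inE => /eqP hp.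
  by move: (H1 p); rewrite hp /= => /and3P [-> _ ->].
by move: (H2 ord_max).
Qed.

Lemma wbound m (l : 'I_m -> nat) (j : 'I_m) :
  j.+1 * (l j + \sum_(i < m | j < i) l i) <= \sum_(i < m) i.+1 * l i.
Proof.
rewrite mulnDr big_distrr /= [X in _ <= X](bigD1 j) //= leq_add2l.
rewrite big_mkcond [X in _ <= X]big_mkcond /=; apply: leq_sum => i _.
case: ifP => hi; last by [].
have -> : i != j by rewrite neq_ltn hi orbT.
by rewrite leq_mul2r ltnS ltnW ?orbT.
Qed.

Theorem theorem4p2 (g : nat -> nat)
  (g_mono : forall i j, i <= j -> g i <= g j)
  (g_ge : forall i, i <= g i)
  (n : nat) (hn : 1 <= n) (m : nat) (hm1 : 1 <= m) (hmn : m <= n) :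
  #|Cm (fun i : 'I_n => g i.+1) m| =
  \sum_(l : {ffun 'I_m -> 'I_m.+1} | \sum_(i < m) i.+1 * l i == m)
     \prod_(j < m) 'C(n - ginv g j.+1 - \sum_(i < m | j < i) l i + 1, l j).
Proof.
case: m hm1 hmn => [//|m] _ hmn.
pose A j := [set p : 'I_n | j.+1 <= g p.+1].
have hA : forall j, A j.+1 \subset A j.
  by move=> j; apply/subsetP => p; rewrite !inE => h; apply: ltnW.
pose lamr (r : {ffun 'I_n -> 'I_m.+2}) :=
  [ffun j : 'I_m.+1 => (inord #|[set p | r p == j.+1 :> nat]| : 'I_m.+2)].
have fibb : forall r, r \in Cm (fun i : 'I_n => g i.+1) m.+1 ->
    forall j : 'I_m.+1, #|[set p | r p == j.+1 :> nat]| < m.+2.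
  move=> r; rewrite inE => /andP [_ /eqP hs] j.
  rewrite ltnS; apply: (@leq_trans (\sum_(i < n) r i)); last by rewrite hs.
  rewrite sumfib.
  apply: leq_trans (le_sum_one (fun j : 'I_m.+1 => j.+1 * #|[set p | r p == j.+1 :> nat]|) j).
  by rewrite leq_pmull.
rewrite -sum1_card (partition_big lamr (fun l => \sum_(i < m.+1) i.+1 * l i == m.+1)); last first.
  move=> r hr; move: (hr); rewrite inE => /andP [_ /eqP hs].
  apply/eqP; rewrite -[RHS]hs sumfib; apply: eq_bigr => j _.
  by rewrite ffunE inordK //; apply: fibb.
apply: eq_bigr => l /eqP hl.
pose lam j := nat_of_ord (l (inord j)).
transitivity #|SS m.+1 m.+1 A lam setT|.
  rewrite -sum1_card; apply: eq_bigl => r; rewrite [RHS]inE.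
  apply/andP/andP.
    case=> hr /eqP hlr.
    have hf : forall j : 'I_m.+1, #|[set p | r p == j.+1 :> nat]| = l j.
      by move=> j; rewrite -hlr ffunE inordK //; apply: fibb.
    move: (hr); rewrite inE => /andP [/forallP H1 _]; split.
      apply/forallP => p; apply/implyP => hp.
      by rewrite in_setT -ltnS ltn_ord inE prednK //; apply: H1.
    by apply/forallP => v; rewrite hf /lam inord_val.
  case=> /forallP H1 /forallP H2.
  have hf : forall j : 'I_m.+1, #|[set p | r p == j.+1 :> nat]| = l j.
    by move=> j; rewrite (eqP (H2 j)) /lam inord_val.
  split.
    rewrite inE; apply/andP; split.
      apply/forallP => p; move: (H1 p); case: (posnP (r p)) => [->|hp] //=.
      by case/and3P => _ _; rewrite inE prednK.
    by rewrite sumfib; apply/eqP; rewrite -[RHS]hl; apply: eq_bigr => j _; rewrite hf.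
  by apply/eqP/ffunP => j; rewrite ffunE hf inord_val.
rewrite (core _ hA (leqnn _)).
apply: eq_bigr => j _.
rewrite setIT.
have [/andP [hq1 hq2] hqe] := ginvP g_mono g_ge j.
have -> : A j = [set p : 'I_n | (ginv g j.+1).-1 <= p].
  apply/setP => p; rewrite !inE hqe.
  by case: (ginv g j.+1) hq1 => [//|q] _ /=.
have hj := ltn_ord j.
rewrite card_ge; last by lia.
have -> : \sum_(i < m.+1 | j < i) lam i = \sum_(i < m.+1 | j < i) l i.
  by apply: eq_bigr => i _; rewrite /lam inord_val.
rewrite /lam inord_val.
have hb := wbound (fun i => nat_of_ord (l i)) j; rewrite /= hl in hb.
move: hb; set S := \sum_(i < m.+1 | j < i) l i => hb.
case: (posnP (l j)) => [->|hpos]; first by rewrite !bin0.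
have h2 : S + j.+1 <= j.+1 * (l j + S) by nia.
congr (binomial _ _); clearbody S; move: hq1 hq2; generalize (ginv g j.+1) => q hq1 hq2.
have h3 : S + j.+1 <= n by apply: leq_trans h2 (leq_trans hb hmn).
move: h3 hq1 hq2; clear; move=> h3 hq1 hq2; lia.
Qed.
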